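(* Let $N\ge 3$ and let $G$ be the graph on vertices $\{u_{1j},b_{1j},u_{2j}: j\in[N]\}$ whose fractional stable set polytope $QSTAB(G)\subseteq\mathbb R^{3N}$ is given by: $u_{1j},b_{1j},u_{2j}\ge0$ for $j\in[N]$; $b_{1j}+\sum_{k=1}^N u_{1k}\le1$ for $j\in[N]$; $\sum_{j=1}^N u_{2j}\le1$; $u_{1j}+u_{2j}+b_{1j}\le1$ for $j\in[N]$. Let $O=[N]$. For every $U\subseteq O$ with $2\le|U|\le N-1$, every $m\in O\setminus U$ and every $V$ with $U\subseteq V\subseteq O$, the vector $\mathbf v(m,U,V)$ with $u_{1m}=|U|^{-1}$, $b_{1j}=1-|U|^{-1}$ for $j\in V$, $u_{2j}=|U|^{-1}$ for $j\in U$, and all other coordinates $0$, is an extreme point of $QSTAB(G)$.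
   Context: $G$ is the enhanced conflict graph of a $2\times N$ switch whose traffic consists of unicasts from input 1 to each output $j$ ($u_{1j}$), a broadcast from input 1 to all outputs (subflows $b_{1j}$), and unicasts from input 2 to each output $j$ ($u_{2j}$); its edges are: $u_{1j}\sim u_{1k}$ and $u_{2j}\sim u_{2k}$ for $j\ne k$; $b_{1j}\sim u_{1k}$ for all $j,k$; and $u_{1j}\sim u_{2j}$, $u_{2j}\sim b_{1j}$ for all $j$. $QSTAB(G)$ is the set of nonnegative vectors satisfying all clique inequalities, which for this graph are the inequalities listed. *)

(* Defs.v *)
From HB Require Import structures.
From mathcomp Require Import all_boot all_order all_algebra.
Set Implicit Arguments. Unset Strict Implicit. Unset Printing Implicit Defensive.
Import Order.TTheory GRing.Theory Num.Theory.
Local Open Scope ring_scope.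

(* A point of R^{3N}: coordinates indexed by (kind, j) with kind in 'I_3:
   kind 0 = u_{1j}, kind 1 = b_{1j}, kind 2 = u_{2j}. *)
Notation pt R N := {ffun 'I_3 * 'I_N -> R}.

Definition kU1 : 'I_3 := @Ordinal 3 0 erefl.
Definition kB1 : 'I_3 := @Ordinal 3 1 erefl.
Definition kU2 : 'I_3 := @Ordinal 3 2 erefl.

Definition u1 {R : realFieldType} {N} (x : pt R N) (j : 'I_N) := x (kU1, j).
Definition b1 {R : realFieldType} {N} (x : pt R N) (j : 'I_N) := x (kB1, j).
Definition u2 {R : realFieldType} {N} (x : pt R N) (j : 'I_N) := x (kU2, j).

Definition QSTAB {R : realFieldType} {N} (x : pt R N) : Prop :=
  [/\ (forall c j, 0 <= x (c, j)),
      (forall j, b1 x j + \sum_(k < N) u1 x k <= 1),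
      \sum_(j < N) u2 x j <= 1
    & (forall j, u1 x j + u2 x j + b1 x j <= 1)].

Definition extreme_point {R : realFieldType} {N} (P : pt R N -> Prop) (x : pt R N) : Prop :=
  P x /\ forall (y z : pt R N) (t : R), P y -> P z -> 0 < t -> t < 1 ->
    (forall i, x i = t * y i + (1 - t) * z i) -> y = z.

Definition vmUV {R : realFieldType} {N} (m : 'I_N) (U V : {set 'I_N}) : pt R N :=
  [ffun cj : 'I_3 * 'I_N =>
     let c := cj.1 in let j := cj.2 in
     if c == kU1 then (if j == m then (#|U|%:R)^-1 else 0)
     else if c == kB1 then (if j \in V then 1 - (#|U|%:R)^-1 else 0)
     else (if j \in U then (#|U|%:R)^-1 else 0) : R].

(* Main.v *)
Require Import Defs.
From HB Require Import structures.
From mathcomp Require Import all_boot all_order all_algebra.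
From mathcomp Require Import ring lra.
Import Order.TTheory GRing.Theory Num.Theory.
Local Open Scope ring_scope.

Lemma tight1 (R : realFieldType) (t fx fy fz : R) : 0 < t -> t < 1 ->
  fx = t * fy + (1 - t) * fz -> fy <= 1 -> fz <= 1 -> fx = 1 -> fy = 1.
Proof. move=> t0 t1 h hy hz hx; nra. Qed.

Lemma tight0 (R : realFieldType) (t fx fy fz : R) : 0 < t -> t < 1 ->
  fx = t * fy + (1 - t) * fz -> 0 <= fy -> 0 <= fz -> fx = 0 -> fy = 0.
Proof. move=> t0 t1 h hy hz hx; nra. Qed.

Arguments tight0 {R t fx fy fz}.
Arguments tight1 {R t fx fy fz}.

Lemma sumlin (R : realFieldType) N (t : R) (F G H : 'I_N -> R) :
  (forall k, F k = t * G k + (1 - t) * H k) ->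
  \sum_(k < N) F k = t * \sum_(k < N) G k + (1 - t) * \sum_(k < N) H k.
Proof.
move=> h; rewrite (eq_bigr _ (fun k _ => h k)) big_split /= -!mulr_sumr //.
Qed.

Arguments sumlin {R N t F G H}.

Lemma key (R : realFieldType) (N : nat) (U V : {set 'I_N}) (m : 'I_N) :
  (2 <= #|U|)%N -> m \notin U -> U \subset V ->
  forall (y z : pt R N) (t : R), QSTAB y -> QSTAB z -> 0 < t -> t < 1 ->
  (forall i, vmUV m U V i = t * y i + (1 - t) * z i) -> y = vmUV m U V.
Proof.
move=> hU mU UV y z t [y0 yb yu2 yc] [z0 zb zu2 zc] t0 t1 hx.
set a : R := (#|U|%:R)^-1.
set X : pt R N := vmUV m U V.
have knz : (#|U|%:R : R) != 0 by rewrite pnatr_eq0 -lt0n (leq_trans _ hU).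
have ka : (#|U|%:R : R) * a = 1 by rewrite mulfV.
have Z : forall i, X i = 0 -> y i = 0.
  move=> [c j] h; exact: (tight0 t0 t1 (hx (c, j)) (y0 c j) (z0 c j) h).
have hu1 : forall j, j != m -> y (kU1, j) = 0.
  by move=> j jm; apply: Z; rewrite ffunE /= (negbTE jm).
have hb : forall j, j \notin V -> y (kB1, j) = 0.
  by move=> j jV; apply: Z; rewrite ffunE /= (negbTE jV).
have hu2 : forall j, j \notin U -> y (kU2, j) = 0.
  by move=> j jU; apply: Z; rewrite ffunE /= (negbTE jU).
have Xu1 : \sum_(k < N) (vmUV m U V : pt R N) (kU1, k) = a.
  rewrite (bigD1 m) //= big1 ?addr0; first by rewrite ffunE /= eqxx.
  by move=> j jm; rewrite ffunE /= (negbTE jm).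
have Yu1 : \sum_(k < N) y (kU1, k) = y (kU1, m).
  by rewrite (bigD1 m) //= big1 ?addr0 // => j /hu1.
have hV : forall j, j \in V -> y (kB1, j) + y (kU1, m) = 1.
  move=> j jV; rewrite -Yu1.
  apply: (tight1 t0 t1 (fx := vmUV m U V (kB1, j) + \sum_(k < N) vmUV m U V (kU1, k)) (fz := z (kB1, j) + \sum_(k < N) z (kU1, k))).
  - rewrite (sumlin (fun k => hx (kU1, k))) hx; ring.
  - exact: yb.
  - exact: zb.
  - by rewrite Xu1 ffunE /= jV subrK.
have hUj : forall j, j \in U -> y (kU1, j) + y (kU2, j) + y (kB1, j) = 1.
  move=> j jU.
  have jm : j != m by apply: contraNneq mU => <-.
  apply: (tight1 t0 t1 (fx := vmUV m U V (kU1, j) + vmUV m U V (kU2, j) + vmUV m U V (kB1, j)) (fz := z (kU1, j) + z (kU2, j) + z (kB1, j))).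
  - rewrite !hx; ring.
  - exact: yc.
  - exact: zc.
  - by rewrite !ffunE /= (negbTE jm) jU (subsetP UV _ jU) add0r subrKC.
have Su2 : \sum_(k < N) y (kU2, k) = 1.
  apply: (tight1 t0 t1 (fx := \sum_(k < N) vmUV m U V (kU2, k)) (fz := \sum_(k < N) z (kU2, k))).
  - exact: (sumlin (fun k => hx (kU2, k))).
  - exact: yu2.
  - exact: zu2.
  - rewrite (eq_bigr (fun k => if k \in U then a else 0)); last by move=> k _; rewrite ffunE.
    by rewrite -big_mkcond /= sumr_const -mulr_natl ka.
have u2U : forall j, j \in U -> y (kU2, j) = y (kU1, m).
  move=> j jU.
  have jm : j != m by apply: contraNneq mU => <-.
  have := hUj j jU; have := hV j (subsetP UV _ jU); rewrite (hu1 j jm); lra.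
have ym : y (kU1, m) = a.
  have : (#|U|%:R : R) * y (kU1, m) = 1.
    rewrite -[RHS]Su2 (bigID (mem U)) /= [X in _ + X]big1 ?addr0; last by move=> j /hu2.
    by rewrite (eq_bigr _ u2U) sumr_const mulr_natl.
  by move=> h; apply: (mulfI knz); rewrite h ka.
apply/ffunP => -[c j]; rewrite ffunE /=.
case: c => [[|[|[|c]]] Hc] //.
- have -> : Ordinal Hc = kU1 by apply: val_inj.
  rewrite /=; case: eqP => [->|/eqP jm]; [exact: ym | exact: hu1].
- have -> : Ordinal Hc = kB1 by apply: val_inj.
  rewrite /=; case: ifP => jV; last by apply: hb; rewrite jV.
  have := hV j jV; rewrite ym /a; lra.
- have -> : Ordinal Hc = kU2 by apply: val_inj.
  rewrite /=; case: ifP => jU; last by apply: hu2; rewrite jU.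
  by rewrite u2U.
Qed.

Arguments key {R N U V m}.

Theorem theorem10 (R : realFieldType) (N : nat) (HN : (3 <= N)%N)
  (U V : {set 'I_N}) (m : 'I_N) :
  (2 <= #|U|)%N -> (#|U| <= N - 1)%N -> m \notin U -> U \subset V ->
  extreme_point (@QSTAB R N) (vmUV m U V).
Proof.
move=> hU _ mU UV; split.
  set a : R := (#|U|%:R)^-1.
  have knz : (#|U|%:R : R) != 0 by rewrite pnatr_eq0 -lt0n (leq_trans _ hU).
  have a0 : 0 <= a by rewrite invr_ge0 ler0n.
  have a1 : a <= 1 by rewrite invf_le1 ?ler1n ?(leq_trans _ hU) // ltr0n (leq_trans _ hU).
  have Xu1 : \sum_(k < N) (vmUV m U V : pt R N) (kU1, k) = a.
    rewrite (bigD1 m) //= big1 ?addr0; first by rewrite ffunE /= eqxx.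
    by move=> j jm; rewrite ffunE /= (negbTE jm).
  split.
  - move=> [[|[|[|c]]] Hc] // j; rewrite ffunE /= -/a;
      repeat case: ifP => _ //; lra.
  - move=> j; rewrite /b1 /u1 Xu1 ffunE /= -/a; case: ifP => _; lra.
  - rewrite /u2 (eq_bigr (fun k => if k \in U then a else 0)); last by move=> k _; rewrite ffunE.
    by rewrite -big_mkcond /= sumr_const -mulr_natl mulfV.
  - move=> j; rewrite /b1 /u1 /u2 !ffunE /= -/a.
    case: eqP => [->|_]; first by rewrite (negbTE mU) addr0; case: ifP => _; lra.
    rewrite add0r; case: ifP => jU; first by rewrite (subsetP UV _ jU); lra.
    case: ifP => _; lra.
move=> y z t Py Pz t0 t1 hx.
have Ey := key hU mU UV y z t Py Pz t0 t1 hx.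
have h' : forall i, (vmUV m U V : pt R N) i = (1 - t) * z i + (1 - (1 - t)) * y i.
  by move=> i; rewrite hx; ring.
have Ez : z = vmUV m U V.
  by apply: (key hU mU UV z y (1 - t) Pz Py _ _ h'); lra.
by rewrite Ey Ez.
Qed.
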